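(* Let $k\in\mathbb{Z}$ with $k<-2$, $j\in\{-\tfrac12,-1,\dots\}$, $s\in\mathbb{Z}$, and let $V$ be any of the modules $D^{k,s}_0$, $D^{+,k,s}_j$, $D^{-,k,s}_j$, with its $\mathbb{Z}\times\mathbb{Z}$ grading $V=\bigoplus_{m,n\in\mathbb{Z}}V_{m,n}$. Then (i) $\dim_\mathbb{C}V_{m,n}<\infty$ for all $m,n\in\mathbb{Z}$; (ii) for every $n\in\mathbb{Z}$ there is $N_n\in\mathbb{Z}$ such that $V_{m,n}=\{0\}$ for all $m\le N_n$.
   Context: $\mathfrak{sl}_2$ has basis $J^+,J^-,J^0$ with $[J^+,J^-]=J^0$, $[J^0,J^\pm]=\pm2J^\pm$. For $j\in-\tfrac12\mathbb{N}$, $D^+_j$ is the $\mathfrak{sl}_2$-module with basis $\{|j,m\rangle_+\}_{m\ge0}$, $J^0|j,m\rangle_+=2(m-j)|j,m\rangle_+$, $J^+|j,m\rangle_+=\sqrt{(m+1)(m-2j)}|j,m+1\rangle_+$, $J^-|j,m\rangle_+=-\sqrt{m(m-1-2j)}|j,m-1\rangle_+$; $D^-_j$ has basis $\{|j,m\rangle_-\}_{m\ge0}$, $J^0|j,m\rangle_-=2(j-m)|j,m\rangle_-$, $J^+|j,m\rangle_-=-\sqrt{m(m-1-2j)}|j,m-1\rangle_-$, $J^-|j,m\rangle_-=\sqrt{(m+1)(m-2j)}|j,m+1\rangle_-$; $D_0=\mathbb{C}$ is the trivial module. $\widehat{\mathfrak{sl}}_2$ has generators $J^a_n$ ($a\in\{+,-,0\}$,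 $n\in\mathbb{Z}$), $K$, $d$ with $[J^+_m,J^-_n]=J^0_{m+n}+Km\delta_{m+n,0}$, $[J^0_m,J^\pm_n]=\pm2J^\pm_{m+n}$, $[J^0_m,J^0_n]=2Km\delta_{m+n,0}$, $[J^\pm_m,J^\pm_n]=0$, $[d,J^a_n]=nJ^a_n$, $K$ central; $J^a_0$ is identified with $J^a$. With $\mathfrak{r}_+=\mathrm{span}\{J^a_n:n\ge1\}$, $\mathfrak{k}=\mathrm{span}\{J^a_0,K,d\}$, the prolongation of $V\in\{D^\pm_j,D_0\}$ at level $k$ is $V^k=\mathcal{U}(\widehat{\mathfrak{sl}}_2)\otimes_{\mathcal{U}(\mathfrak{k}\oplus\mathfrak{r}_+)}V^{(k)}$, where on $V^{(k)}=V$ the element $K$ acts as $k$, $\mathfrak{r}_+$ as $0$, and $d$ by the scalar $-\frac{j(j+1)}{k+2}$ (for $D^\pm_j$) resp. $0$ (for $D_0$). The spectral flow automorphism $\vartheta_s$ is $J^\pm_n\mapsto J^\pm_{n\mp s}$, $J^0_n\mapsto J^0_n-sK\delta_{n,0}$, $K\mapsto K$, $d\mapsto d+\frac s2J^0_0-\frac{s^2}4K$, and for a module $(W,\rho)$, $W^s=(W,\rho\circ\vartheta_s)$. Set $D^{\pm,k,s}_j=((D^\pm_j)^k)^s$, $D^{k,s}_0=((D_0)^k)^s$. The distinguished cyclic vector of such a module is $v_0=1\otimes|j,0\rangle_\pm$ resp. $1\otimes1$; it is a simultaneous eigenvector of $d$ and $J^0_0$ (for the flowed action) with eigenvalues $\delta_0,q_0$.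 The $\mathbb{Z}\times\mathbb{Z}$ grading is $V_{m,n}=\{v\in V: dv=(\delta_0-m)v,\ J^0_0v=(q_0+2n)v\}$ (so $-d$, which acts as the Sugawara $L_0$, has eigenvalue $-\delta_0+m$ on $V_{m,n}$), and $V=\bigoplus_{m,n}V_{m,n}$. *)

(* Defs.v *)
From HB Require Import structures.
From mathcomp Require Import all_boot all_order all_algebra.
From mathcomp Require Import reals.
From mathcomp Require Import complex.
Set Implicit Arguments. Unset Strict Implicit. Unset Printing Implicit Defensive.
Import Order.TTheory GRing.Theory Num.Theory.
Local Open Scope ring_scope.

(* Operators of a representation of affine sl_2 on a vector space W:   *)
(* images of the basis elements J^+_n, J^-_n, J^0_n, K, d.             *)
Record ops (C : fieldType) (W : lmodType C) := Ops {
  opJp : int -> W -> W;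
  opJm : int -> W -> W;
  opJ0 : int -> W -> W;
  opK  : W -> W;
  opd  : W -> W }.

Definition linfun_p (C : fieldType) (U W : lmodType C) (f : U -> W) : Prop :=
  forall (a : C) (u v : U), f (a *: u + v) = a *: f u + f v.

Definition kdelta (C : fieldType) (W : lmodType C) (m : int) (w : W) : W :=
  if m == 0 then w else 0.

(* (W, rho) is a representation of affine sl_2 (brackets written on the
   basis J^a_n, K, d; all pairs of basis elements are covered up to
   antisymmetry). *)
Definition is_rep (C : fieldType) (W : lmodType C) (rho : ops W) : Prop :=
  (forall n, linfun_p (opJp rho n)) /\ (forall n, linfun_p (opJm rho n)) /\
  (forall n, linfun_p (opJ0 rho n)) /\ linfun_p (opK rho) /\ linfun_p (opd rho) /\
  forall (m n : int) (v : W),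
  (opJp rho m (opJm rho n v) - opJm rho n (opJp rho m v)
     = opJ0 rho (m + n) v + kdelta (m + n) (m%:~R *: opK rho v)) /\
  (opJ0 rho m (opJp rho n v) - opJp rho n (opJ0 rho m v)
     = 2%:R *: opJp rho (m + n) v) /\
  (opJ0 rho m (opJm rho n v) - opJm rho n (opJ0 rho m v)
     = - (2%:R *: opJm rho (m + n) v)) /\
  (opJ0 rho m (opJ0 rho n v) - opJ0 rho n (opJ0 rho m v)
     = kdelta (m + n) ((2 * m)%:~R *: opK rho v)) /\
  (opJp rho m (opJp rho n v) = opJp rho n (opJp rho m v)) /\
  (opJm rho m (opJm rho n v) = opJm rho n (opJm rho m v)) /\
  (opK rho (opJp rho n v) = opJp rho n (opK rho v)) /\
  (opK rho (opJm rho n v) = opJm rho n (opK rho v)) /\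
  (opK rho (opJ0 rho n v) = opJ0 rho n (opK rho v)) /\
  (opK rho (opd rho v) = opd rho (opK rho v)) /\
  (opd rho (opJp rho n v) - opJp rho n (opd rho v) = n%:~R *: opJp rho n v) /\
  (opd rho (opJm rho n v) - opJm rho n (opd rho v) = n%:~R *: opJm rho n v) /\
  (opd rho (opJ0 rho n v) - opJ0 rho n (opd rho v) = n%:~R *: opJ0 rho n v).

Definition is_hom (C : fieldType) (W M : lmodType C) (rho : ops W) (sigma : ops M)
  (g : W -> M) : Prop :=
  linfun_p g /\
  forall (n : int) (w : W),
  [/\ g (opJp rho n w) = opJp sigma n (g w),
      g (opJm rho n w) = opJm sigma n (g w),
      g (opJ0 rho n w) = opJ0 sigma n (g w),
      g (opK rho w) = opK sigma (g w) &
      g (opd rho w) = opd sigma (g w)].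

Record sl2mod (C : fieldType) := SL2Mod {
  car :> lmodType C;
  eJp : car -> car;
  eJm : car -> car;
  eJ0 : car -> car;
  vac : car }.

Section Dmodules.
Variable R : realType.
Local Notation C := (R[i]).

Definition sqn (n : nat) : C := ((Num.sqrt (n%:R : R))%:C)%C.

(* j = - t/2, t >= 1 ;  |j,m>_pm  is the monomial 'X^m in {poly C}.
   D^+_j : J^0|m> = 2(m-j)|m> = (2m+t)|m>,
           J^+|m> = sqrt((m+1)(m-2j))|m+1> = sqrt((m+1)(m+t))|m+1>,
           J^-|m> = -sqrt(m(m-1-2j))|m-1> = -sqrt(m(m-1+t))|m-1>.      *)
Definition raise (t : nat) (p : {poly C}) : {poly C} :=
  \poly_(i < (size p).+1) (sqn (i * (i.-1 + t)) * p`_i.-1).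
Definition lower (t : nat) (p : {poly C}) : {poly C} :=
  \poly_(i < size p) (- sqn (i.+1 * (i + t)) * p`_i.+1).

Definition Dplus (t : nat) : sl2mod C :=
  @SL2Mod C {poly C} (raise t) (lower t)
    (fun p => \poly_(i < size p) (((2 * i + t)%N)%:R * p`_i)) 1.

(* D^-_j : J^0|m> = 2(j-m)|m> = -(2m+t)|m>,
           J^+|m> = -sqrt(m(m-1-2j))|m-1>,  J^-|m> = sqrt((m+1)(m-2j))|m+1>. *)
Definition Dminus (t : nat) : sl2mod C :=
  @SL2Mod C {poly C} (lower t) (raise t)
    (fun p => \poly_(i < size p) (- ((2 * i + t)%N)%:R * p`_i)) 1.

Definition Dtriv : sl2mod C :=
  @SL2Mod C (C^o) (fun _ => 0) (fun _ => 0) (fun _ => 0) 1.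

Inductive Dkind := KD0 | KDplus | KDminus.

Definition Dmod (t : nat) (kd : Dkind) : sl2mod C :=
  match kd with KD0 => Dtriv | KDplus => Dplus t | KDminus => Dminus t end.

(* the scalar by which d acts on V^{(k)} : -j(j+1)/(k+2) for D^pm_j, 0 for D_0 *)
Definition dscal (k : int) (t : nat) (kd : Dkind) : C :=
  let j : C := - (t%:R / 2%:R) in
  match kd with KD0 => 0 | _ => - (j * (j + 1)) / (k%:~R + 2%:R) end.

End Dmodules.

(* f : V -> W is a homomorphism of (k + r_+)-modules from V^{(k)}      *)
(* (K acts by k, d by delta, r_+ by 0, J^a_0 by the sl_2 action) to    *)
(* the restriction of (W, rho).                                        *)
Definition is_kr_hom (C : fieldType) (V : sl2mod C) (k : int) (delta : C)
  (W : lmodType C) (rho : ops W) (f : V -> W) : Prop :=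
  linfun_p f /\
  forall v : V,
  [/\ opJp rho 0 (f v) = f (eJp v),
      opJm rho 0 (f v) = f (eJm v),
      opJ0 rho 0 (f v) = f (eJ0 v),
      opK rho (f v) = k%:~R *: f v &
      opd rho (f v) = delta *: f v] /\
  forall n : int, 0 < n ->
    [/\ opJp rho n (f v) = 0, opJm rho n (f v) = 0 & opJ0 rho n (f v) = 0].

(* (W, rho, iota) is the prolongation U(sl2^) (x)_{U(k + r_+)} V^{(k)},
   characterised by the universal property of the induced module. *)
Definition is_prolongation (C : fieldType) (V : sl2mod C) (k : int) (delta : C)
  (W : lmodType C) (rho : ops W) (iota : V -> W) : Prop :=
  is_rep rho /\ is_kr_hom k delta rho iota /\
  forall (M : lmodType C) (sigma : ops M), is_rep sigma ->
  forall f : V -> M, is_kr_hom k delta sigma f ->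
    (exists g : W -> M, is_hom rho sigma g /\ forall v, g (iota v) = f v) /\
    (forall g1 g2 : W -> M, is_hom rho sigma g1 -> is_hom rho sigma g2 ->
       (forall v, g1 (iota v) = f v) -> (forall v, g2 (iota v) = f v) ->
       forall w, g1 w = g2 w).

Definition sflow (C : fieldType) (W : lmodType C) (s : int) (rho : ops W) : ops W :=
  @Ops C W (fun n => opJp rho (n - s)) (fun n => opJm rho (n + s))
    (fun n v => opJ0 rho n v - kdelta n (s%:~R *: opK rho v))
    (opK rho)
    (fun v => opd rho v + (s%:~R / 2%:R) *: opJ0 rho 0 v
                        - ((s ^+ 2)%:~R / 4%:R) *: opK rho v).

Definition graded (C : fieldType) (W : lmodType C) (rho : ops W) (delta0 q0 : C)
  (m n : int) (v : W) : Prop :=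
  opd rho v = (delta0 - m%:~R) *: v /\ opJ0 rho 0 v = (q0 + 2%:R * n%:~R) *: v.

Definition findim (C : fieldType) (W : lmodType C) (S : W -> Prop) : Prop :=
  exists (r : nat) (b : 'I_r -> W), forall v, S v ->
    exists c : 'I_r -> C, v = \sum_(i < r) c i *: b i.

(* Main.v *)
Require Import Defs.
From HB Require Import structures.
From mathcomp Require Import all_boot all_order all_algebra.
From mathcomp Require Import reals.
From mathcomp Require Import complex.
From mathcomp Require Import boolp.
From mathcomp Require Import ring lra zify.
From Stdlib Require Import Classical.
Set Implicit Arguments. Unset Strict Implicit. Unset Printing Implicit Defensive.
Import Order.TTheory GRing.Theory Num.Theory.
Local Open Scope ring_scope.
Section Lin.
Variables (C : fieldType) (U W : lmodType C) (f : U -> W).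
Hypothesis Hf : linfun_p f.
Lemma lin0 : f 0 = 0.
Proof. have := Hf 1 0 0; rewrite !scale1r addr0 => /eqP; by rewrite -subr_eq0 opprD addrA subrr add0r oppr_eq0 => /eqP. Qed.
Lemma linD u v : f (u + v) = f u + f v.
Proof. by have := Hf 1 u v; rewrite !scale1r. Qed.
Lemma linZ a u : f (a *: u) = a *: f u.
Proof. by have := Hf a u 0; rewrite !addr0 lin0 addr0. Qed.
Lemma linN u : f (- u) = - f u.
Proof. by rewrite -scaleN1r linZ scaleN1r. Qed.
Lemma linB u v : f (u - v) = f u - f v.
Proof. by rewrite linD linN. Qed.
Lemma lin_sum (I : Type) (r : seq I) (F : I -> U) (Pr : pred I) :
  f (\sum_(i <- r | Pr i) F i) = \sum_(i <- r | Pr i) f (F i).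
Proof.
elim: r => [|x r IH]; first by rewrite !big_nil lin0.
rewrite !big_cons; case: (Pr x) => //; by rewrite linD IH.
Qed.
End Lin.

Lemma rep_lin (C : fieldType) (W : lmodType C) (rho : ops W) : is_rep rho ->
  (forall n, linfun_p (opJp rho n)) /\ (forall n, linfun_p (opJm rho n)) /\
  (forall n, linfun_p (opJ0 rho n)) /\ linfun_p (opK rho) /\ linfun_p (opd rho).
Proof. by case=> [a [b [c [d [e _]]]]]. Qed.
Section Quot.
Variables (C : fieldType) (W : lmodType C) (P : W -> Prop).
Hypothesis P0 : P 0.
Hypothesis PD : forall a u v, P u -> P v -> P (a *: u + v).

Lemma PN u : P u -> P (- u).
Proof. by move=> Pu; have := PD (-1) Pu P0; rewrite addr0 scaleN1r. Qed.
Lemma PA u v : P u -> P v -> P (u + v).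
Proof. by move=> Pu Pv; have := PD 1 Pu Pv; rewrite scale1r. Qed.
Lemma PZ a u : P u -> P (a *: u).
Proof. by move=> Pu; have := PD a Pu P0; rewrite addr0. Qed.

Definition coset (w : W) : W -> Prop := fun x => P (x - w).
Definition Qt := {A : W -> Prop | exists w, A = coset w}.
HB.instance Definition _ := gen_eqMixin Qt.
HB.instance Definition _ := gen_choiceMixin Qt.

Definition qpi (w : W) : Qt := exist _ (coset w) (ex_intro _ w erefl).
Definition qrepr (q : Qt) : W := proj1_sig (cid (proj2_sig q)).

Lemma qreprK q : qpi (qrepr q) = q.
Proof.
case: q => A HA; rewrite /qrepr /=; case: (cid HA) => w /= E.
by apply: eq_exist; rewrite E.
Qed.

Lemma qpi_eq x y : qpi x = qpi y <-> P (x - y).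
Proof.
split.
  move=> /(congr1 (@proj1_sig _ _)) /= E.
  have : coset x x by rewrite /coset subrr.
  by rewrite E.
move=> Pxy; apply: eq_exist; apply: funext => z; apply: propext; rewrite /coset; split.
  move=> H; have := PA H Pxy; by rewrite addrA subrK.
move=> H; have := PA H (PN Pxy); by rewrite opprB addrA subrK.
Qed.

Lemma qrepr_pi x : P (qrepr (qpi x) - x).
Proof. by apply/qpi_eq; rewrite qreprK. Qed.

Definition qadd (a b : Qt) := qpi (qrepr a + qrepr b).
Definition qopp (a : Qt) := qpi (- qrepr a).
Definition qzero := qpi 0.
Definition qscale (c : C) (a : Qt) := qpi (c *: qrepr a).

Lemma qaddE x y : qadd (qpi x) (qpi y) = qpi (x + y).
Proof.
apply/qpi_eq.
have := PA (qrepr_pi x) (qrepr_pi y).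
by rewrite opprD addrACA.
Qed.
Lemma qoppE x : qopp (qpi x) = qpi (- x).
Proof.
apply/qpi_eq; suff -> : - qrepr (qpi x) - - x = - (qrepr (qpi x) - x) by apply: PN; exact: qrepr_pi.
by rewrite opprB opprK addrC.
Qed.
Lemma qscaleE c x : qscale c (qpi x) = qpi (c *: x).
Proof. apply/qpi_eq; rewrite -scalerBr; apply: PZ; exact: qrepr_pi. Qed.

Lemma qsurj q : exists x, q = qpi x.
Proof. by exists (qrepr q); rewrite qreprK. Qed.

Lemma qaddA : associative qadd.
Proof. move=> a b c; case: (qsurj a) (qsurj b) (qsurj c) => [x ->] [y ->] [z ->]; by rewrite !qaddE addrA. Qed.
Lemma qaddC : commutative qadd.
Proof. move=> a b; case: (qsurj a) (qsurj b) => [x ->] [y ->]; by rewrite !qaddE addrC. Qed.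
Lemma qadd0 : left_id qzero qadd.
Proof. move=> a; case: (qsurj a) => [x ->]; by rewrite /qzero qaddE add0r. Qed.
Lemma qaddN : left_inverse qzero qopp qadd.
Proof. move=> a; case: (qsurj a) => [x ->]; by rewrite qoppE qaddE addNr. Qed.

HB.instance Definition _ := GRing.isZmodule.Build Qt qaddA qaddC qadd0 qaddN.
Lemma qpiD x y : qpi (x + y) = qpi x + qpi y.
Proof. exact: (esym (qaddE x y)). Qed.

Lemma qscaleA a b v : qscale a (qscale b v) = qscale (a * b) v.
Proof. case: (qsurj v) => [x ->]; by rewrite !qscaleE scalerA. Qed.
Lemma qscale1 : left_id 1 qscale.
Proof. move=> v; case: (qsurj v) => [x ->]; by rewrite !qscaleE scale1r. Qed.
Lemma qscaleDr : right_distributive qscale +%R.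
Proof. move=> a u v; case: (qsurj u) (qsurj v) => [x ->] [y ->]; by rewrite -qpiD !qscaleE -qpiD scalerDr. Qed.
Lemma qscaleDl v : {morph qscale^~ v: a b / a + b}.
Proof. move=> a b; case: (qsurj v) => [x ->]; by rewrite !qscaleE -qpiD scalerDl. Qed.

HB.instance Definition _ := GRing.Zmodule_isLmodule.Build C Qt qscaleA qscale1 qscaleDr qscaleDl.

Lemma qpiZ a x : qpi (a *: x) = a *: qpi x.
Proof. exact: (esym (qscaleE a x)). Qed.
Lemma qpi0 : qpi 0 = 0.
Proof. by []. Qed.
Lemma qpiN x : qpi (- x) = - qpi x.
Proof. by rewrite -scaleN1r qpiZ scaleN1r. Qed.
Lemma qpiB x y : qpi (x - y) = qpi x - qpi y.
Proof. by rewrite qpiD qpiN. Qed.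
Lemma qpi_kd m x : qpi (kdelta m x) = kdelta m (qpi x).
Proof. by rewrite /kdelta; case: (m == 0). Qed.
Lemma qpi_lin : linfun_p qpi.
Proof. by move=> a u v; rewrite qpiD qpiZ. Qed.

Variable rho : ops W.
Hypothesis Hrep : is_rep rho.
Hypothesis IJp : forall n x, P x -> P (opJp rho n x).
Hypothesis IJm : forall n x, P x -> P (opJm rho n x).
Hypothesis IJ0 : forall n x, P x -> P (opJ0 rho n x).
Hypothesis IK : forall x, P x -> P (opK rho x).
Hypothesis Id : forall x, P x -> P (opd rho x).

Definition qlift (f : W -> W) (q : Qt) : Qt := qpi (f (qrepr q)).
Lemma qliftE f x : linfun_p f -> (forall x, P x -> P (f x)) -> qlift f (qpi x) = qpi (f x).
Proof. move=> Lf If; apply/qpi_eq; rewrite -(linB Lf); apply: If; exact: qrepr_pi. Qed.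

Definition sigma : ops Qt := @Ops C Qt (fun n => qlift (opJp rho n)) (fun n => qlift (opJm rho n))
  (fun n => qlift (opJ0 rho n)) (qlift (opK rho)) (qlift (opd rho)).

Lemma lJp n : linfun_p (opJp rho n). Proof. by case: Hrep. Qed.
Lemma lJm n : linfun_p (opJm rho n). Proof. by case: Hrep => _ []. Qed.
Lemma lJ0 n : linfun_p (opJ0 rho n). Proof. by case: Hrep => _ [] _ []. Qed.
Lemma lK : linfun_p (opK rho). Proof. by case: Hrep => _ [] _ [] _ []. Qed.
Lemma ld : linfun_p (opd rho). Proof. by case: Hrep => _ [] _ [] _ [] _ []. Qed.

Lemma sJp n x : opJp sigma n (qpi x) = qpi (opJp rho n x). Proof. exact: qliftE (lJp n) (IJp n). Qed.
Lemma sJm n x : opJm sigma n (qpi x) = qpi (opJm rho n x). Proof. exact: qliftE (lJm n) (IJm n). Qed.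
Lemma sJ0 n x : opJ0 sigma n (qpi x) = qpi (opJ0 rho n x). Proof. exact: qliftE (lJ0 n) (IJ0 n). Qed.
Lemma sK x : opK sigma (qpi x) = qpi (opK rho x). Proof. exact: qliftE lK IK. Qed.
Lemma sd x : opd sigma (qpi x) = qpi (opd rho x). Proof. exact: qliftE ld Id. Qed.

Lemma slin (f : W -> W) : linfun_p f -> (forall x, P x -> P (f x)) -> linfun_p (qlift f).
Proof.
move=> Lf If a u v; case: (qsurj u) (qsurj v) => [x ->] [y ->].
by rewrite -qpiZ -qpiD !qliftE // (Lf a x y) qpiD qpiZ.
Qed.

Lemma sigma_rep : is_rep sigma.
Proof.
split; first by move=> n; apply: slin; [exact: lJp|exact: IJp].
split; first by move=> n; apply: slin; [exact: lJm|exact: IJm].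
split; first by move=> n; apply: slin; [exact: lJ0|exact: IJ0].
split; first by apply: slin; [exact: lK|exact: IK].
split; first by apply: slin; [exact: ld|exact: Id].
move=> m n q; case: (qsurj q) => [x ->].
case: Hrep => _ [] _ [] _ [] _ [] _ /(_ m n x) H.
do 12! (case: H => H1 H; move: H1 => /(congr1 qpi);
  rewrite ?(qpiB, qpiD, qpiN, qpiZ, qpi_kd) -?sJp -?sJm -?sJ0 -?sK -?sd
          -?sJp -?sJm -?sJ0 -?sK -?sd => H1; split; first exact: H1; clear H1).
move: H => /(congr1 qpi);
  by rewrite ?(qpiB, qpiD, qpiN, qpiZ, qpi_kd) -?sJp -?sJm -?sJ0 -?sK -?sd -?sJp -?sJm -?sJ0 -?sK -?sd.
Qed.

Lemma span_all (V : sl2mod C) (k : int) (delta : C) (iota : V -> W) :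
  is_prolongation k delta rho iota -> (forall v, P (iota v)) -> forall w, P w.
Proof.
move=> [_ [_ Hu]] Pi w.
have z1 n : opJp sigma n 0 = 0 by rewrite -qpi0 sJp (lin0 (lJp n)).
have z2 n : opJm sigma n 0 = 0 by rewrite -qpi0 sJm (lin0 (lJm n)).
have z3 n : opJ0 sigma n 0 = 0 by rewrite -qpi0 sJ0 (lin0 (lJ0 n)).
have z4 : opK sigma 0 = 0 by rewrite -qpi0 sK (lin0 lK).
have z5 : opd sigma 0 = 0 by rewrite -qpi0 sd (lin0 ld).
have Hkr : is_kr_hom k delta sigma (fun _ : V => (0 : Qt)).
  split; first by move=> a u v; rewrite scaler0 addr0.
  move=> v; split.
    by split; rewrite ?z1 ?z2 ?z3 ?z4 ?z5 ?scaler0.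
  by move=> n _; split; rewrite ?z1 ?z2 ?z3.
have [_ U] := Hu Qt sigma sigma_rep _ Hkr.
have h1 : is_hom rho sigma (fun _ => 0 : Qt).
  split; first by move=> a u v; rewrite scaler0 addr0.
  by move=> n x; split; rewrite ?z1 ?z2 ?z3 ?z4 ?z5.
have h2 : is_hom rho sigma qpi.
  split; first exact: qpi_lin.
  by move=> n x; rewrite sJp sJm sJ0 sK sd.
have h3 : forall v, qpi (iota v) = 0.
  by move=> v; rewrite -qpi0; apply/qpi_eq; rewrite subr0.
have := U (fun _ => 0) qpi h1 h2 (fun _ => erefl) h3 w.
move=> /esym; rewrite -qpi0 => /qpi_eq; by rewrite subr0.
Qed.
End Quot.
Section Span.
Variables (C : fieldType) (W : lmodType C).
Inductive inspan (bs : seq W) : W -> Prop :=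
| is0 : inspan bs 0
| isb x a w : x \in bs -> inspan bs w -> inspan bs (a *: x + w).

Lemma inspan_lin bs a u w : inspan bs u -> inspan bs w -> inspan bs (a *: u + w).
Proof.
elim=> [|x a' y xb _ IH] Hw; first by rewrite scaler0 add0r.
by rewrite scalerDr scalerA -addrA; apply: isb => //; apply: IH.
Qed.
Lemma inspan_mem bs x : x \in bs -> inspan bs x.
Proof. by move=> xb; have := isb 1 xb (is0 bs); rewrite scale1r addr0. Qed.
Lemma inspan_sub bs bs' w : {subset bs <= bs'} -> inspan bs w -> inspan bs' w.
Proof. move=> S; elim=> [|x a y xb _ IH]; [exact: is0 | exact: isb (S _ xb) IH]. Qed.
Lemma inspan_map bs (f : W -> W) w : linfun_p f -> inspan bs w -> inspan (map f bs) (f w).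
Proof.
move=> Lf; elim=> [|x a y xb _ IH]; first by rewrite (lin0 Lf); exact: is0.
by rewrite Lf; apply: isb IH; apply: map_f.
Qed.
Lemma inspan_sum bs w : inspan bs w ->
  exists cf : 'I_(size bs) -> C, w = \sum_(i < size bs) cf i *: nth 0 bs i.
Proof.
elim=> [|x a y xb _ [cf ->]]; first by exists (fun _ => 0); rewrite big1 // => i _; rewrite scale0r.
have ib : (index x bs < size bs)%N by rewrite index_mem.
exists (fun i => cf i + (if i == Ordinal ib then a else 0)).
rewrite addrC (bigD1 (Ordinal ib)) //= [RHS](bigD1 (Ordinal ib)) //= eqxx nth_index //.
rewrite scalerDl -!addrA; congr (_ + _); rewrite addrC; congr (_ + _).
by apply: eq_bigr => i /negPf ->; rewrite addr0.
Qed.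

Lemma indep (T : W -> W) (HT : linfun_p T) (K : eqType) (l : seq K) :
  forall (F : K -> W) (lam : K -> C), uniq l -> injective lam ->
  (forall x, T (F x) = lam x *: F x) -> \sum_(x <- l) F x = 0 -> forall x, x \in l -> F x = 0.
Proof.
elim: l => [|y l IH] F lam /= Hu Hinj Heig Hs x //.
case/andP: Hu => ynl ul; rewrite big_cons in Hs.
have Hs2 : \sum_(x <- l) ((lam x - lam y) *: F x) = 0.
  have : T (F y + \sum_(x <- l) F x) - lam y *: (F y + \sum_(x <- l) F x) = 0.
    by rewrite Hs (lin0 HT) scaler0 subr0.
  rewrite (linD HT) (lin_sum HT) Heig scalerDr opprD addrACA subrr add0r scaler_sumr -sumrB.
  move=> E; apply: eq_trans E; apply: eq_bigr => z _; by rewrite Heig scalerBl.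
have HeG : forall z, T ((lam z - lam y) *: F z) = lam z *: ((lam z - lam y) *: F z).
  by move=> z; rewrite (linZ HT) Heig !scalerA mulrC.
have Hl : forall z, z \in l -> F z = 0.
  move=> z zl; have := IH (fun z => (lam z - lam y) *: F z) lam ul Hinj HeG Hs2 z zl.
  move/eqP; rewrite scaler_eq0 subr_eq0 => /orP [/eqP/Hinj E|/eqP //].
  by move: ynl; rewrite -E zl.
have Fy : F y = 0 by move: Hs; rewrite big_seq big1 ?addr0 // => z; exact: Hl.
rewrite inE => /orP [/eqP ->|]; [exact: Fy | exact: Hl].
Qed.

Lemma proj_eig (T : W -> W) (HT : linfun_p T) (K : eqType) (l : seq K)
  (F : K -> W) (lam : K -> C) (v : W) (la : C) : uniq l -> injective lam ->
  (forall x, T (F x) = lam x *: F x) -> v = \sum_(x <- l) F x -> T v = la *: v ->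
  v = \sum_(x <- l | lam x == la) F x.
Proof.
move=> Ul Hinj Heig Ev Tv.
have HeG : forall z, T ((lam z - la) *: F z) = lam z *: ((lam z - la) *: F z).
  by move=> z; rewrite (linZ HT) Heig !scalerA mulrC.
have Hinj' := Hinj.
have S0 : \sum_(x <- l) (lam x - la) *: F x = 0.
  have : T v - la *: v = 0 by rewrite Tv subrr.
  rewrite {1}Ev (lin_sum HT) Ev scaler_sumr -sumrB => E; apply: eq_trans E.
  by apply: eq_bigr => z _; rewrite Heig scalerBl.
have Z := indep HT Ul Hinj HeG S0.
have E2 : \sum_(x <- l | lam x != la) F x = 0.
  rewrite big_seq_cond big1 // => x /andP [xl nx]; have := Z x xl; move/eqP.
  by rewrite scaler_eq0 subr_eq0 (negPf nx) => /eqP.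
by rewrite {1}Ev (bigID (fun x => lam x == la)) /= E2 addr0.
Qed.
End Span.

Section GenS.
Variables (C : fieldType) (W : lmodType C) (rho : ops W) (V : sl2mod C)
  (k : int) (delta : C) (iota : V -> W).
Hypothesis Hrep : is_rep rho.
Hypothesis Hkr : is_kr_hom k delta rho iota.
Variables (b : nat -> V) (chi : nat -> int) (q : C).
Hypothesis HJp : forall i, eJp (b i) = 0 \/ exists a j, eJp (b i) = a *: b j /\ chi j = chi i + 1.
Hypothesis HJm : forall i, eJm (b i) = 0 \/ exists a j, eJm (b i) = a *: b j /\ chi j = chi i - 1.
Hypothesis HJ0 : forall i, eJ0 (b i) = (q + 2%:R * (chi i)%:~R) *: b i.

Local Notation Jp := (opJp rho).
Local Notation Jm := (opJm rho).
Local Notation J0 := (opJ0 rho).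
Local Notation K := (opK rho).
Local Notation d := (opd rho).

Lemma Ilin : linfun_p iota. Proof. by case: Hkr. Qed.
Lemma I0 v : [/\ Jp 0 (iota v) = iota (eJp v), Jm 0 (iota v) = iota (eJm v),
      J0 0 (iota v) = iota (eJ0 v), K (iota v) = k%:~R *: iota v &
      d (iota v) = delta *: iota v].
Proof. by case: Hkr => _ /(_ v) []. Qed.
Lemma Ipos v n : 0 < n -> [/\ Jp n (iota v) = 0, Jm n (iota v) = 0 & J0 n (iota v) = 0].
Proof. by case: Hkr => _ /(_ v) [] _ /(_ n). Qed.

Let R m n v := proj2 (proj2 (proj2 (proj2 (proj2 Hrep)))) m n v.
Lemma cPM m n v : Jp m (Jm n v) - Jm n (Jp m v) = J0 (m + n) v + kdelta (m + n) (m%:~R *: K v).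
Proof. by case: (R m n v). Qed.
Lemma c0P m n v : J0 m (Jp n v) - Jp n (J0 m v) = 2%:R *: Jp (m + n) v.
Proof. by case: (R m n v) => _ []. Qed.
Lemma c0M m n v : J0 m (Jm n v) - Jm n (J0 m v) = - (2%:R *: Jm (m + n) v).
Proof. by case: (R m n v) => _ [] _ []. Qed.
Lemma c00 m n v : J0 m (J0 n v) - J0 n (J0 m v) = kdelta (m + n) ((2 * m)%:~R *: K v).
Proof. by case: (R m n v) => _ [] _ [] _ []. Qed.
Lemma cPP m n v : Jp m (Jp n v) = Jp n (Jp m v).
Proof. by case: (R m n v) => _ [] _ [] _ [] _ []. Qed.
Lemma cMM m n v : Jm m (Jm n v) = Jm n (Jm m v).
Proof. by case: (R m n v) => _ [] _ [] _ [] _ [] _ []. Qed.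
Lemma cKP n v : K (Jp n v) = Jp n (K v).
Proof. by case: (R 0 n v) => _ [] _ [] _ [] _ [] _ [] _ []. Qed.
Lemma cKM n v : K (Jm n v) = Jm n (K v).
Proof. by case: (R 0 n v) => _ [] _ [] _ [] _ [] _ [] _ [] _ []. Qed.
Lemma cK0 n v : K (J0 n v) = J0 n (K v).
Proof. by case: (R 0 n v) => _ [] _ [] _ [] _ [] _ [] _ [] _ [] _ []. Qed.
Lemma cdP n v : d (Jp n v) - Jp n (d v) = n%:~R *: Jp n v.
Proof. by case: (R 0 n v) => _ [] _ [] _ [] _ [] _ [] _ [] _ [] _ [] _ [] _ []. Qed.
Lemma cdM n v : d (Jm n v) - Jm n (d v) = n%:~R *: Jm n v.
Proof. by case: (R 0 n v) => _ [] _ [] _ [] _ [] _ [] _ [] _ [] _ [] _ [] _ [] _ []. Qed.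
Lemma cd0 n v : d (J0 n v) - J0 n (d v) = n%:~R *: J0 n v.
Proof. by case: (R 0 n v) => _ [] _ [] _ [] _ [] _ [] _ [] _ [] _ [] _ [] _ [] _ []. Qed.

Lemma LJp n : linfun_p (Jp n). Proof. exact: (lJp Hrep). Qed.
Lemma LJm n : linfun_p (Jm n). Proof. exact: (lJm Hrep). Qed.
Lemma LJ0 n : linfun_p (J0 n). Proof. exact: (lJ0 Hrep). Qed.
Lemma LK : linfun_p K. Proof. exact: (lK Hrep). Qed.
Lemma Ld : linfun_p d. Proof. exact: (ld Hrep). Qed.

Inductive Gen : int -> int -> W -> Prop :=
| Gz e c : Gen e c 0
| Gb i : Gen 0 (chi i) (iota (b i))
| Gadd e c a u w : Gen e c u -> Gen e c w -> Gen e c (a *: u + w)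
| Gp e c n w : 0 < n -> Gen e c w -> Gen (e + n) (c + 1) (Jp (- n) w)
| Gm e c n w : 0 < n -> Gen e c w -> Gen (e + n) (c - 1) (Jm (- n) w)
| G0 e c n w : 0 < n -> Gen e c w -> Gen (e + n) c (J0 (- n) w).

Lemma Gen_cast e c e' c' w : e = e' -> c = c' -> Gen e c w -> Gen e' c' w.
Proof. by move=> -> ->. Qed.
Lemma Gen_cast' e c e' c' w : Gen e c w -> e = e' -> c = c' -> Gen e' c' w.
Proof. by move=> G <- <-. Qed.
Lemma eq_sub_swap (x y z : W) : x - y = z -> y = x - z.
Proof. by move=> <-; rewrite opprB addrC subrK. Qed.
Lemma eq_sub_add (x y z : W) : x - y = z -> x = z + y.
Proof. by move=> <-; rewrite subrK. Qed.
Lemma Gen_Z e c a w : Gen e c w -> Gen e c (a *: w).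
Proof. by move=> G; have := Gadd a G (Gz e c); rewrite addr0. Qed.
Lemma Gen_D e c u w : Gen e c u -> Gen e c w -> Gen e c (u + w).
Proof. by move=> G1 G2; have := Gadd 1 G1 G2; rewrite scale1r. Qed.
Lemma Gen_N e c w : Gen e c w -> Gen e c (- w).
Proof. by move=> G; rewrite -scaleN1r; apply: Gen_Z. Qed.
Lemma Gen_B e c u w : Gen e c u -> Gen e c w -> Gen e c (u - w).
Proof. by move=> G1 G2; apply: Gen_D => //; apply: Gen_N. Qed.

Lemma Gen_neg e c w : Gen e c w -> e < 0 -> w = 0.
Proof.
elim=> {e c w} //.
- move=> e c a u w _ IHu _ IHw lt; by rewrite IHu // IHw // scaler0 addr0.
- move=> e c n w n0 _ IH lt; rewrite IH ?(lin0 (LJp _)) //; lia.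
- move=> e c n w n0 _ IH lt; rewrite IH ?(lin0 (LJm _)) //; lia.
- move=> e c n w n0 _ IH lt; rewrite IH ?(lin0 (LJ0 _)) //; lia.
Qed.

Lemma Gen_K e c w : Gen e c w -> K w = k%:~R *: w.
Proof.
elim=> {e c w}.
- by move=> e c; rewrite (lin0 LK) scaler0.
- by move=> i; case: (I0 (b i)).
- by move=> e c a u w _ IHu _ IHw; rewrite (LK a u w) IHu IHw scalerDr !scalerA mulrC.
- by move=> e c n w _ _ IH; rewrite cKP IH (linZ (LJp _)).
- by move=> e c n w _ _ IH; rewrite cKM IH (linZ (LJm _)).
- by move=> e c n w _ _ IH; rewrite cK0 IH (linZ (LJ0 _)).
Qed.

Lemma Gen_d e c w : Gen e c w -> d w = (delta - e%:~R) *: w.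
Proof.
elim=> {e c w}.
- by move=> e c; rewrite (lin0 Ld) scaler0.
- by move=> i; case: (I0 (b i)) => _ _ _ _ ->; rewrite subr0.
- by move=> e c a u w _ IHu _ IHw; rewrite (Ld a u w) IHu IHw scalerDr !scalerA mulrC.
- move=> e c n w _ _ IH; move/eqP: (cdP (- n) w); rewrite subr_eq => /eqP ->.
  by rewrite IH (linZ (LJp _)) -scalerDl rmorphD rmorphN; congr (_ *: _); ring.
- move=> e c n w _ _ IH; move/eqP: (cdM (- n) w); rewrite subr_eq => /eqP ->.
  by rewrite IH (linZ (LJm _)) -scalerDl rmorphD rmorphN; congr (_ *: _); ring.
- move=> e c n w _ _ IH; move/eqP: (cd0 (- n) w); rewrite subr_eq => /eqP ->.
  by rewrite IH (linZ (LJ0 _)) -scalerDl rmorphD rmorphN; congr (_ *: _); ring.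
Qed.

Lemma kd0 (m : int) (x : W) : m != 0 -> kdelta m x = 0.
Proof. by rewrite /kdelta => /negPf ->. Qed.

Lemma Gen_J0 e c w : Gen e c w -> J0 0 w = (q + 2%:R * c%:~R) *: w.
Proof.
elim=> {e c w}.
- by move=> e c; rewrite (lin0 (LJ0 _)) scaler0.
- by move=> i; case: (I0 (b i)) => _ _ -> _ _; rewrite HJ0 (linZ Ilin).
- by move=> e c a u w _ IHu _ IHw; rewrite (LJ0 0 a u w) IHu IHw scalerDr !scalerA mulrC.
- move=> e c n w _ _ IH; move/eqP: (c0P 0 (- n) w); rewrite subr_eq => /eqP ->.
  by rewrite add0r IH (linZ (LJp _)) -scalerDl rmorphD /=; congr (_ *: _); ring.
- move=> e c n w _ _ IH; move/eqP: (c0M 0 (- n) w); rewrite subr_eq => /eqP ->.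
  by rewrite add0r IH (linZ (LJm _)) -scaleNr -scalerDl rmorphB /=; congr (_ *: _); ring.
- move=> e c n w n0 _ IH; move/eqP: (c00 0 (- n) w); rewrite subr_eq => /eqP ->.
  rewrite add0r kd0 ?add0r ?IH ?(linZ (LJ0 _)) //; by rewrite oppr_eq0 gt_eqF.
Qed.

Lemma Gen_kd e e' c w (dd : int) (a : C) : Gen e c w -> (dd = 0 -> e' = e) ->
  Gen e' c (kdelta dd (a *: K w)).
Proof.
move=> G H; rewrite /kdelta; case: eqP => [/H ->|_]; last exact: Gz.
by rewrite (Gen_K G); do 2! apply: Gen_Z.
Qed.

Lemma Gen_kd2 e e' c c' w (dd : int) (a : C) : Gen e c w -> (dd = 0 -> e' = e) -> c = c' ->
  Gen e' c' (kdelta dd (a *: K w)).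
Proof. by move=> G H <-; exact: (Gen_kd _ G H). Qed.

Definition Opsok e c w := forall m, [/\ Gen (e - m) (c + 1) (Jp m w),
    Gen (e - m) (c - 1) (Jm m w) & Gen (e - m) c (J0 m w)].

Lemma Opsok_any e c w : Gen e c w ->
  (forall m, 0 <= m -> [/\ Gen (e - m) (c + 1) (Jp m w),
    Gen (e - m) (c - 1) (Jm m w) & Gen (e - m) c (J0 m w)]) -> Opsok e c w.
Proof.
move=> G H m; case: (ltrP m 0) => [m0|m0]; last exact: H.
have n0 : 0 < - m by rewrite oppr_gt0.
by split; [have := Gp n0 G | have := Gm n0 G | have := G0 n0 G]; rewrite opprK.
Qed.

Lemma Gen_ops e c w : Gen e c w -> Opsok e c w.
Proof.
move=> G; apply: Opsok_any => //; elim: G => {e c w}.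
- by move=> e c m _; rewrite (lin0 (LJp _)) (lin0 (LJm _)) (lin0 (LJ0 _)); split; apply: Gz.
- move=> i m; rewrite le_eqVlt => /orP [/eqP <-|m0]; last first.
    by case: (Ipos (b i) m0) => -> -> ->; split; apply: Gz.
  case: (I0 (b i)) => -> -> -> _ _; rewrite subr0; split.
  + case: (HJp i) => [->|[a [j [-> <-]]]]; first by rewrite (lin0 Ilin); apply: Gz.
    by rewrite (linZ Ilin); apply: Gen_Z; apply: Gb.
  + case: (HJm i) => [->|[a [j [-> <-]]]]; first by rewrite (lin0 Ilin); apply: Gz.
    by rewrite (linZ Ilin); apply: Gen_Z; apply: Gb.
  + by rewrite HJ0 (linZ Ilin); apply: Gen_Z; apply: Gb.
- move=> e c a u w _ IHu _ IHw m m0; case: (IHu m m0) => [U1 U2 U3]; case: (IHw m m0) => [W1 W2 W3].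
  by rewrite (LJp m a u w) (LJm m a u w) (LJ0 m a u w); split; apply: Gadd.
- move=> e c n w n0 Gw IH m m0.
  have A := Opsok_any Gw IH; case: (IH m m0) => [I1 I2 I3].
  split.
  + rewrite cPP; apply: (Gen_cast' (Gp n0 I1)); ring.
  + rewrite (eq_sub_swap (cPM (- n) m w)); apply: Gen_B.
      apply: (Gen_cast' (Gp n0 I2)); ring.
    apply: Gen_D; first by case: (A (- n + m)) => _ _ X; apply: (Gen_cast' X); ring.
    apply: (Gen_kd2 _ Gw) => [h|]; [lia|ring].
  + rewrite (eq_sub_add (c0P m (- n) w)); apply: Gen_D.
      by case: (A (m + - n)) => X _ _; apply: Gen_Z; apply: (Gen_cast' X); ring.
    apply: (Gen_cast' (Gp n0 I3)); ring.
- move=> e c n w n0 Gw IH m m0.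
  have A := Opsok_any Gw IH; case: (IH m m0) => [I1 I2 I3].
  split.
  + rewrite (eq_sub_add (cPM m (- n) w)); apply: Gen_D; last first.
      apply: (Gen_cast' (Gm n0 I1)); ring.
    apply: Gen_D; first by case: (A (m + - n)) => _ _ X; apply: (Gen_cast' X); ring.
    apply: (Gen_kd2 _ Gw) => [h|]; [lia|ring].
  + rewrite cMM; apply: (Gen_cast' (Gm n0 I2)); ring.
  + rewrite (eq_sub_add (c0M m (- n) w)); apply: Gen_D.
      by case: (A (m + - n)) => _ X _; apply: Gen_N; apply: Gen_Z; apply: (Gen_cast' X); ring.
    apply: (Gen_cast' (Gm n0 I3)); ring.
- move=> e c n w n0 Gw IH m m0.
  have A := Opsok_any Gw IH; case: (IH m m0) => [I1 I2 I3].
  split.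
  + rewrite (eq_sub_swap (c0P (- n) m w)); apply: Gen_B.
      apply: (Gen_cast' (G0 n0 I1)); ring.
    by case: (A (- n + m)) => X _ _; apply: Gen_Z; apply: (Gen_cast' X); ring.
  + rewrite (eq_sub_swap (c0M (- n) m w)); apply: Gen_B.
      apply: (Gen_cast' (G0 n0 I2)); ring.
    by case: (A (- n + m)) => _ X _; apply: Gen_N; apply: Gen_Z; apply: (Gen_cast' X); ring.
  + rewrite (eq_sub_add (c00 m (- n) w)); apply: Gen_D.
      apply: (Gen_kd2 _ Gw) => [h|]; [lia|ring].
    apply: (Gen_cast' (G0 n0 I3)); ring.
Qed.

Inductive Sp : W -> Prop :=
| Sz : Sp 0
| Sg e c u w : Gen e c u -> Sp w -> Sp (u + w).

Lemma Sp_gen e c u : Gen e c u -> Sp u.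
Proof. by move=> G; have := Sg G Sz; rewrite addr0. Qed.
Lemma Sp_add u w : Sp u -> Sp w -> Sp (u + w).
Proof. elim=> [|e c x y Gx _ IH] Sw; first by rewrite add0r. by rewrite -addrA; exact: Sg Gx (IH Sw). Qed.
Lemma Sp_lin a u w : Sp u -> Sp w -> Sp (a *: u + w).
Proof.
move=> Su Sw; apply: Sp_add => //; elim: Su => [|e c x y Gx _ IH]; first by rewrite scaler0; exact: Sz.
by rewrite scalerDr; exact: Sg (Gen_Z _ Gx) IH.
Qed.

Lemma Sp_op (f : W -> W) : linfun_p f -> (forall e c u, Gen e c u -> exists e' c', Gen e' c' (f u)) ->
  forall w, Sp w -> Sp (f w).
Proof.
move=> Lf H w; elim=> [|e c x y Gx _ IH]; first by rewrite (lin0 Lf); exact: Sz.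
rewrite (linD Lf); case: (H _ _ _ Gx) => e' [c' G']; exact: Sg G' IH.
Qed.

Hypothesis Hspan : forall v : V, exists (n : nat) (cf : nat -> C), v = \sum_(i < n) cf i *: b i.

Lemma Sp_iota v : Sp (iota v).
Proof.
case: (Hspan v) => n [cf ->]; rewrite (lin_sum Ilin); apply: big_ind.
- exact: Sz.
- exact: Sp_add.
- by move=> i _; rewrite (linZ Ilin); apply: Sp_gen (Gen_Z _ (Gb _)).
Qed.

Hypothesis Hind : is_prolongation k delta rho iota.

Lemma Sp_all w : Sp w.
Proof.
have S0 := Sz.
apply: (@span_all _ _ Sp S0 Sp_lin rho Hrep _ _ _ _ _ _ _ _ _ Hind Sp_iota).
- move=> n; apply: Sp_op (LJp n) _ => e c u G; case: (Gen_ops G n) => X _ _; by do 2 eexists; exact: X.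
- move=> n; apply: Sp_op (LJm n) _ => e c u G; case: (Gen_ops G n) => _ X _; by do 2 eexists; exact: X.
- move=> n; apply: Sp_op (LJ0 n) _ => e c u G; case: (Gen_ops G n) => _ _ X; by do 2 eexists; exact: X.
- apply: Sp_op LK _ => e c u G; exists e, c; rewrite (Gen_K G); exact: Gen_Z.
- apply: Sp_op Ld _ => e c u G; exists e, c; rewrite (Gen_d G); exact: Gen_Z.
Qed.

Lemma K_all w : K w = k%:~R *: w.
Proof.
elim: (Sp_all w) => [|e c x y Gx _ IH]; first by rewrite (lin0 LK) scaler0.
by rewrite (linD LK) IH (Gen_K Gx) scalerDr.
Qed.

Definition Sp2 (w : W) := exists (l : seq (int * int)) (F : int * int -> W),
  [/\ uniq l, forall x, Gen x.1 x.2 (F x) & w = \sum_(x <- l) F x].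

Lemma Sp2_all w : Sp2 w.
Proof.
elim: (Sp_all w) => [|e c u w' Gu _ [l [F [Ul GF ->]]]].
  by exists [::], (fun _ => 0); split => //; [move=> x; exact: Gz | rewrite big_nil].
case: (boolP ((e, c) \in l)) => inl.
- exists l, (fun x => if x == (e, c) then u + F x else F x); split => //.
    by move=> x; case: eqP => [->|_] //; apply: Gen_D => //; exact: GF (e, c).
  rewrite (bigD1_seq (e, c)) //= [RHS](bigD1_seq (e, c)) //= eqxx addrA.
  congr (_ + _); apply: eq_bigr => x /negPf ->; done.
- exists ((e, c) :: l), (fun x => if x == (e, c) then u else F x); split.
  + by rewrite /= inl.
  + by move=> x; case: eqP => [->|_].
  + rewrite big_cons eqxx; congr (_ + _); apply: eq_big_seq => x xl.
    by case: eqP => // E; move: inl; rewrite -E xl.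
Qed.

Hypothesis Hchi : forall i c, chi i = c -> i = `|c|%N.

Fixpoint Lst (fuel : nat) (e c : int) : seq W :=
  match fuel with
  | 0 => [::]
  | f'.+1 => (if e == 0 then [:: iota (b `|c|%N)] else [::]) ++
     flatten [seq map (Jp (- n)) (Lst f' (e - n) (c - 1)) ++
                  map (Jm (- n)) (Lst f' (e - n) (c + 1)) ++
                  map (J0 (- n)) (Lst f' (e - n) c) | n <- [seq (i.+1)%:Z | i <- seq.iota 0 `|e|%N]]
  end.

Lemma mem_ns (e n : int) : 0 < n -> 0 <= e -> n \in [seq (i.+1)%:Z | i <- seq.iota 0 (absz (e + n))].
Proof.
case: n => [[|n']|n'] // _; case: e => [e'|e'] // _.
apply/mapP; exists n' => //; rewrite mem_iota /=; lia.
Qed.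

Lemma Lst_sub f' e n c (x : W) : 0 < n -> 0 <= e ->
  (x \in map (Jp (- n)) (Lst f' e (c - 1))) || (x \in map (Jm (- n)) (Lst f' e (c + 1)))
   || (x \in map (J0 (- n)) (Lst f' e c)) ->
  x \in Lst f'.+1 (e + n) c.
Proof.
move=> n0 e0 H; rewrite /= mem_cat; apply/orP; right; apply/flatten_mapP.
exists n; first exact: mem_ns.
by rewrite addrK !mem_cat orbA.
Qed.

Lemma Gen_Lst e c w : Gen e c w -> forall fuel : nat, e < fuel%:Z -> inspan (Lst fuel e c) w.
Proof.
elim=> {e c w}.
- by move=> e c fuel _; exact: is0.
- move=> i [|f'] // _; apply: inspan_mem; by rewrite /= -(Hchi erefl) mem_head.
- move=> e c a u w _ IHu _ IHw fuel lt; apply: inspan_lin; [exact: IHu | exact: IHw].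
- move=> e c n w n0 Gw IH fuel lt; case: (ltrP e 0) => [e0|e0].
    by rewrite (Gen_neg Gw e0) (lin0 (LJp _)); exact: is0.
  case: fuel lt => [|f'] lt; first lia.
  have := inspan_map (LJp (- n)) (IH f' ltac:(lia)); apply: inspan_sub => x xi.
  by apply: Lst_sub => //; rewrite addrK xi.
- move=> e c n w n0 Gw IH fuel lt; case: (ltrP e 0) => [e0|e0].
    by rewrite (Gen_neg Gw e0) (lin0 (LJm _)); exact: is0.
  case: fuel lt => [|f'] lt; first lia.
  have := inspan_map (LJm (- n)) (IH f' ltac:(lia)); apply: inspan_sub => x xi.
  by apply: Lst_sub => //; rewrite subrK xi orbT.
- move=> e c n w n0 Gw IH fuel lt; case: (ltrP e 0) => [e0|e0].
    by rewrite (Gen_neg Gw e0) (lin0 (LJ0 _)); exact: is0.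
  case: fuel lt => [|f'] lt; first lia.
  have := inspan_map (LJ0 (- n)) (IH f' ltac:(lia)); apply: inspan_sub => x xi.
  by apply: Lst_sub => //; rewrite xi !orbT.
Qed.

Lemma Gen_findim e c : exists bs, forall w, Gen e c w -> inspan bs w.
Proof. exists (Lst `|e|.+1 e c) => w G; have := Gen_Lst G; apply; lia. Qed.

Variable xi : C.
Hypothesis Hxi : forall a b : int, a%:~R + xi * b%:~R = 0 :> C -> a = 0 /\ b = 0.

Lemma intC0 a : (a%:~R : C) = 0 -> a = 0.
Proof. by move=> H; have := @Hxi a 0; rewrite mulr0z mulr0 addr0 => /(_ H) []. Qed.
Lemma int_sol (a : int) (x y : C) : a%:~R = x - y -> x = y -> a = 0.
Proof. by move=> H E; apply: intC0; rewrite H E subrr. Qed.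

Definition Top w := d w + xi *: J0 0 w.
Lemma LTop : linfun_p Top.
Proof.
move=> a u v; rewrite /Top (Ld a u v) (LJ0 0 a u v) scalerDr scalerA mulrC -scalerA.
by rewrite addrACA -scalerDr.
Qed.
Definition lam (x : int * int) : C := (delta - x.1%:~R) + xi * (q + 2%:R * x.2%:~R).
Lemma lam_inj : injective lam.
Proof.
move=> [e1 c1] [e2 c2] H.
have : (e2 - e1)%:~R + xi * (2 * (c1 - c2))%:~R = 0 :> C.
  have -> : (e2 - e1)%:~R + xi * (2 * (c1 - c2))%:~R = lam (e1, c1) - lam (e2, c2) :> C.
    by rewrite /lam /=; ring.
  by rewrite H subrr.
move/Hxi => [A B]; congr pair; lia.
Qed.
Lemma Top_gen e c w : Gen e c w -> Top w = lam (e, c) *: w.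
Proof. by move=> G; rewrite /Top (Gen_d G) (Gen_J0 G) scalerA -scalerDl. Qed.

Lemma key v la : Top v = la *: v -> v = 0 \/ exists e c, Gen e c v.
Proof.
move=> Tv; case: (Sp2_all v) => l [F [Ul GF Ev]].
have Heig : forall x, Top (F x) = lam x *: F x by case=> e c; apply: Top_gen (GF (e, c)).
have E := proj_eig LTop Ul lam_inj Heig Ev Tv.
case: (classic (exists x0, lam x0 = la)) => [[x0 Hx0]|Hn].
- right; exists x0.1, x0.2; rewrite E; apply: big_ind => [|u w|x /eqP Hx].
  + exact: Gz.
  + exact: Gen_D.
  + have -> : x = x0 by apply: lam_inj; rewrite Hx Hx0.
    exact: GF.
- left; rewrite E big1 // => x /eqP Hx; exfalso; apply: Hn; by exists x.
Qed.

Lemma scal_cancel (a a' : C) (v : W) : v <> 0 -> a *: v = a' *: v -> a = a'.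
Proof.
move=> nv /eqP; rewrite -subr_eq0 -scalerBl scaler_eq0 subr_eq0 => /orP [/eqP //|/eqP H].
by exfalso; apply: nv.
Qed.

Lemma zhelp (x y z : W) : x = x + y - z - y + z.
Proof. by rewrite -(addrAC _ (- z)) addrK subrK. Qed.

Lemma graded_info s delta0 q0 m n v : graded (sflow s rho) delta0 q0 m n v -> v <> 0 ->
  exists e c, [/\ Gen e c v, q + 2%:R * c%:~R = q0 + 2%:R * n%:~R + s%:~R * k%:~R &
   delta - e%:~R = (delta0 - m%:~R) - (s%:~R / 2%:R) * (q0 + 2%:R * n%:~R + s%:~R * k%:~R)
      + ((s ^+ 2)%:~R / 4%:R) * k%:~R].
Proof.
rewrite /graded /= /kdelta eqxx K_all => [[Hd' HJ']] nv.
set lJ := q0 + 2%:R * n%:~R + s%:~R * k%:~R.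
have EJ : J0 0 v = lJ *: v.
  by move/eqP: HJ'; rewrite subr_eq => /eqP ->; rewrite scalerA -scalerDl.
set ld := (delta0 - m%:~R) - (s%:~R / 2%:R) * lJ + ((s ^+ 2)%:~R / 4%:R) * k%:~R.
have Ed : d v = ld *: v.
  have H := zhelp (d v) ((s%:~R / 2%:R) *: J0 0 v) (((s ^+ 2)%:~R / 4%:R) *: (k%:~R *: v)).
  rewrite Hd' EJ in H; by rewrite H /ld !scalerA -scalerBl -scalerDl.
have Tv : Top v = (ld + xi * lJ) *: v by rewrite /Top Ed EJ scalerA -scalerDl.
case: (key Tv) => [//|[e [c G]]].
exists e, c; split => //.
- by apply: (scal_cancel nv); rewrite -(Gen_J0 G).
- by apply: (scal_cancel nv); rewrite -(Gen_d G).
Qed.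

Theorem main_abs s delta0 q0 :
  (forall m n : int, findim (graded (sflow s rho) delta0 q0 m n)) /\
  (forall n : int, exists N : int, forall m : int, m <= N ->
     forall v : W, graded (sflow s rho) delta0 q0 m n v -> v = 0).
Proof.
split.
- move=> m n.
  case: (classic (exists v0, graded (sflow s rho) delta0 q0 m n v0 /\ v0 <> 0)) => [[v0 [Gv0 nv0]]|Hn].
  + case: (graded_info Gv0 nv0) => e0 [c0 [G0 Ec0 Ee0]].
    case: (Gen_findim e0 c0) => bs Hbs.
    exists (size bs), (fun i => nth 0 bs i) => v Gv.
    have : inspan bs v.
      case: (classic (v = 0)) => [->|nv]; first exact: is0.
      case: (graded_info Gv nv) => e [c [G Ec Ee]].
      have cc : 2 * (c - c0) = 0.
        by apply: (@int_sol _ (q + 2%:R * c%:~R) (q + 2%:R * c0%:~R)); [ring | rewrite Ec Ec0].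
      have ee : (e0 - e) + (m - m) = 0.
        apply: (@int_sol _ ((delta - e%:~R) + m%:~R) ((delta - e0%:~R) + m%:~R)); first ring.
        by rewrite Ee Ee0.
      apply: Hbs; have -> : c0 = c by lia.
      have -> : e0 = e by lia.
      exact: G.
    by move/inspan_sum => [cf ->]; exists cf.
  + exists 0%N, (fun _ => 0) => v Gv; exists (fun _ => 0); rewrite big_ord0.
    case: (classic (v = 0)) => // nv; exfalso; apply: Hn; by exists v.
- move=> n.
  case: (classic (exists m0 v0, graded (sflow s rho) delta0 q0 m0 n v0 /\ v0 <> 0)) => [[m0 [v0 [Gv0 nv0]]]|Hn].
  + case: (graded_info Gv0 nv0) => e0 [c0 [G0 Ec0 Ee0]].
    exists (m0 - e0 - 1) => m Hm v Gv; case: (classic (v = 0)) => // nv.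
    case: (graded_info Gv nv) => e [c [G Ec Ee]].
    have ee : (e0 - e) + (m - m0) = 0.
      apply: (@int_sol _ ((delta - e%:~R) + m%:~R) ((delta - e0%:~R) + m0%:~R)); first ring.
      by rewrite Ee Ee0; ring.
    apply: (Gen_neg G); lia.
  + exists 0 => m _ v Gv; case: (classic (v = 0)) => // nv; exfalso; apply: Hn; by exists m, v.
Qed.
End GenS.
Section Conc.
Variable R : realType.
Local Notation C := (R[i]).

Lemma ci (a b : int) : a%:~R + 'i * b%:~R = 0 :> C -> a = 0 /\ b = 0.
Proof.
move=> H.
have := Re_rect (realz C a) (realz C b); have := Im_rect (realz C a) (realz C b); rewrite H.
have := Re_rect (realz C 0) (realz C 0); have := Im_rect (realz C 0) (realz C 0).
rewrite !mulr0z mulr0 addr0 => -> -> /eqP; rewrite eq_sym intr_eq0 => /eqP -> /eqP; by rewrite eq_sym intr_eq0 => /eqP ->.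
Qed.

Lemma sqn0 : sqn R 0 = 0.
Proof. by rewrite /sqn sqrtr0. Qed.

Lemma raiseX t i : raise t ('X^i : {poly C}) = sqn R (i.+1 * (i + t))%N *: 'X^(i.+1).
Proof.
apply/polyP => j; rewrite coef_poly size_polyXn coefZ !coefXn.
case: j => [|j] /=; first by rewrite mul0n sqn0 mul0r mulr0.
rewrite eqSS; case: eqP => [->|_]; first by rewrite ltnSn ?eqxx.
by rewrite !mulr0; case: ifP.
Qed.

Lemma lowerX t i : lower t ('X^i : {poly C}) =
  (if i is i'.+1 then - sqn R (i * (i' + t))%N else 0) *: 'X^(i.-1).
Proof.
apply/polyP => j; rewrite coef_poly size_polyXn coefZ !coefXn.
case: i => [|i] /=; first by rewrite mulr0 mul0r; case: ifP.
rewrite eqSS; case: (eqVneq j i) => [->|ne]; first by rewrite ?eqxx ltnS leqnSn.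
by rewrite ?mulr0n ?mulr0; case: ifP.
Qed.

Lemma J0X (f : nat -> C) i : \poly_(j < size ('X^i : {poly C})) (f j * ('X^i : {poly C})`_j) = f i *: 'X^i.
Proof.
apply/polyP => j; rewrite coef_poly size_polyXn coefZ !coefXn.
case: eqP => [->|_]; first by rewrite ltnSn.
by rewrite !mulr0; case: ifP.
Qed.

Lemma spanP (p : {poly C}) : exists (n : nat) (cf : nat -> C), p = \sum_(i < n) cf i *: 'X^i.
Proof. by exists (size p), (fun i => p`_i); rewrite -{1}[p]coefK poly_def. Qed.

End Conc.

Unset Implicit Arguments.
Theorem proposition3p9 (R : realType) (k : int) (hk : k < -2) (t : nat) (ht : (0 < t)%N)
  (s : int) (kd : Dkind)
  (W : lmodType R[i]) (rho : ops W) (iota : Dmod R t kd -> W)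
  (Hind : is_prolongation k (dscal R k t kd) rho iota)
  (delta0 q0 : R[i])
  (Hd : opd (sflow s rho) (iota (vac (Dmod R t kd))) = delta0 *: iota (vac (Dmod R t kd)))
  (Hq : opJ0 (sflow s rho) 0 (iota (vac (Dmod R t kd))) = q0 *: iota (vac (Dmod R t kd))) :
  (forall m n : int, findim (graded (sflow s rho) delta0 q0 m n)) /\
  (forall n : int, exists N : int, forall m : int, m <= N ->
     forall v : W, graded (sflow s rho) delta0 q0 m n v -> v = 0).
Proof.
have Hxi := @ci R.
case: kd iota Hind {Hd Hq} => iota Hind; have [Hrep [Hkr _]] := Hind.
- apply: (@main_abs _ _ _ _ _ _ _ Hrep Hkr (fun i => ((i == 0)%:R : R[i]^o)) (fun i => i%:Z) 0
     _ _ _ _ Hind _ 'i Hxi).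
  + by move=> i; left.
  + by move=> i; left.
  + move=> i /=; case: i => [|i]; first by rewrite mulr0 addr0 scale0r.
    by rewrite /= scaler0.
  + move=> v; exists 1%N, (fun _ => v); rewrite big_ord1 /=; exact: (esym (mulr1 (v : R[i]))).
  + by move=> i c <-.
- apply: (@main_abs _ _ _ _ _ _ _ Hrep Hkr (fun i => ('X^i : {poly R[i]})) (fun i => i%:Z) t%:R
     _ _ _ _ Hind _ 'i Hxi).
  + move=> i; right; exists (sqn R (i.+1 * (i + t))%N), i.+1; split; first exact: raiseX.
    by rewrite -addn1 PoszD.
  + move=> i; case: i => [|i].
      by left; rewrite /= lowerX scale0r.
    right; exists (- sqn R (i.+1 * (i + t))%N), i; split; first exact: lowerX.
    by rewrite -addn1 PoszD addrK.
  + move=> i; rewrite /= (J0X (fun j => ((2 * j + t)%N)%:R)); congr (_ *: _).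
    by rewrite natrD natrM; ring.
  + exact: spanP.
  + by move=> i c <-.
- apply: (@main_abs _ _ _ _ _ _ _ Hrep Hkr (fun i => ('X^i : {poly R[i]})) (fun i => - i%:Z) (- t%:R)
     _ _ _ _ Hind _ 'i Hxi).
  + move=> i; case: i => [|i].
      by left; rewrite /= lowerX scale0r.
    right; exists (- sqn R (i.+1 * (i + t))%N), i; split; first exact: lowerX.
    by rewrite -addn1 PoszD opprD addrK.
  + move=> i; right; exists (sqn R (i.+1 * (i + t))%N), i.+1; split; first exact: raiseX.
    by rewrite -addn1 PoszD opprD.
  + move=> i; rewrite /= (J0X (fun j => - ((2 * j + t)%N)%:R)); congr (_ *: _).
    by rewrite natrD natrM; ring.
  + exact: spanP.
  + by move=> i c <-; rewrite abszN.
Qed.
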